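(* Let $M_1,M_2\in\mathbb{S}^n$ and let $$\mathcal{T}(\{M_1,M_2\})=\{X\in\mathbb{S}^n_+:\ \langle M_1,X\rangle=0,\ \langle M_2,X\rangle=0\}.$$ If $\mathcal{T}(\{M_1,M_2\})$ is rank-one generated, then one of the following holds: (i) there exists $(\alpha_1,\alpha_2)\neq(0,0)$ such that $\alpha_1M_1+\alpha_2M_2\in\mathbb{S}^n_+$, or (ii) there exist $a,b,c\in\mathbb{R}^n$ such that $M_1=\mathrm{Sym}(ac^\top)$ and $M_2=\mathrm{Sym}(bc^\top)$.
   Context: $\mathbb{S}^n$ is the space of real symmetric $n\times n$ matrices with inner product $\langle A,B\rangle=\mathrm{tr}(AB)$, and $\mathbb{S}^n_+$ the cone of positive semidefinite matrices. For $M\in\mathbb{R}^{n\times n}$, $\mathrm{Sym}(M)=(M+M^\top)/2$. A closed convex cone $\mathcal{S}\subseteq\mathbb{S}^n_+$ is called rank-one generated (ROG) if $\mathcal{S}=\mathrm{conv}(\mathcal{S}\cap\{xx^\top: x\in\mathbb{R}^n\})$. *)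

(* Defs.v *)
From mathcomp Require Import all_boot all_order all_algebra.
From mathcomp Require Import reals.
Set Implicit Arguments. Unset Strict Implicit. Unset Printing Implicit Defensive.
Import Order.TTheory GRing.Theory Num.Theory.
Local Open Scope ring_scope.

Section Defs.
Variable (R : realType) (n : nat).

Definition symmx (M : 'M[R]_n) : Prop := M^T = M.

Definition psdmx (M : 'M[R]_n) : Prop :=
  symmx M /\ forall x : 'cV[R]_n, 0 <= (x^T *m M *m x) 0 0.

Definition frob (A B : 'M[R]_n) : R := \tr (A *m B).

Definition Symm (M : 'M[R]_n) : 'M[R]_n := 2^-1 *: (M + M^T).

Definition Tcone (M1 M2 : 'M[R]_n) (X : 'M[R]_n) : Prop :=
  psdmx X /\ frob M1 X = 0 /\ frob M2 X = 0.

Definition conv_rank_one (S : 'M[R]_n -> Prop) (X : 'M[R]_n) : Prop :=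
  exists (k : nat) (w : 'I_k -> R) (x : 'I_k -> 'cV[R]_n),
    (forall i, 0 <= w i) /\ \sum_(i < k) w i = 1 /\
    (forall i, S (x i *m (x i)^T)) /\
    X = \sum_(i < k) w i *: (x i *m (x i)^T).

Definition ROG (S : 'M[R]_n -> Prop) : Prop :=
  forall X, S X <-> conv_rank_one S X.

End Defs.

(* Main.v *)
Require Import Defs.
From mathcomp Require Import all_boot all_order all_algebra.
From mathcomp Require Import reals.
From mathcomp Require Import ring lra.
Import Order.TTheory GRing.Theory Num.Theory.
Local Open Scope ring_scope.
Set Implicit Arguments. Unset Strict Implicit. Unset Printing Implicit Defensive.

Section Basics.
Variable (R : realType) (n : nat).
Implicit Types (M N : 'M[R]_n) (x y z : 'cV[R]_n).

Definition bf M x y : R := (x^T *m M *m y) 0 0.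

Lemma bfDl M x y z : bf M (x + y) z = bf M x z + bf M y z.
Proof. by rewrite /bf linearD /= !mulmxDl mxE. Qed.
Lemma bfDr M x y z : bf M x (y + z) = bf M x y + bf M x z.
Proof. by rewrite /bf !mulmxDr mxE. Qed.
Lemma bfZl M a x y : bf M (a *: x) y = a * bf M x y.
Proof. by rewrite /bf linearZ /= -!scalemxAl mxE. Qed.
Lemma bfZr M a x y : bf M x (a *: y) = a * bf M x y.
Proof. by rewrite /bf -!scalemxAr mxE. Qed.
Lemma bfNl M x y : bf M (- x) y = - bf M x y.
Proof. by rewrite -scaleN1r bfZl mulN1r. Qed.
Lemma bfNr M x y : bf M x (- y) = - bf M x y.
Proof. by rewrite -scaleN1r bfZr mulN1r. Qed.
Lemma bfBl M x y z : bf M (x - y) z = bf M x z - bf M y z.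
Proof. by rewrite bfDl bfNl. Qed.
Lemma bfBr M x y z : bf M x (y - z) = bf M x y - bf M x z.
Proof. by rewrite bfDr bfNr. Qed.
Lemma bf0l M y : bf M 0 y = 0.
Proof. by rewrite /bf linear0 !mul0mx mxE. Qed.
Lemma bf0r M x : bf M x 0 = 0.
Proof. by rewrite /bf !mulmx0 mxE. Qed.
Lemma bf_sym M x y : M^T = M -> bf M x y = bf M y x.
Proof.
move=> sM; rewrite /bf; transitivity ((x^T *m M *m y)^T 0 0); first by rewrite [RHS]mxE.
by rewrite !trmx_mul trmxK sM mulmxA.
Qed.
Lemma bfMD M N x y : bf (M + N) x y = bf M x y + bf N x y.
Proof. by rewrite /bf mulmxDr mulmxDl mxE. Qed.
Lemma bfMZ a M x y : bf (a *: M) x y = a * bf M x y.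
Proof. by rewrite /bf -scalemxAr -scalemxAl mxE. Qed.
Lemma bf_suml M I (r : seq I) (P : pred I) (F : I -> 'cV[R]_n) y :
  bf M (\sum_(i <- r | P i) F i) y = \sum_(i <- r | P i) bf M (F i) y.
Proof. exact: (big_morph (fun x => bf M x y) (fun a b => bfDl M a b y) (bf0l M y)). Qed.
Lemma bf_sumr M I (r : seq I) (P : pred I) (F : I -> 'cV[R]_n) x :
  bf M x (\sum_(i <- r | P i) F i) = \sum_(i <- r | P i) bf M x (F i).
Proof. exact: (big_morph (fun y => bf M x y) (fun a b => bfDr M x a b) (bf0r M x)). Qed.

Lemma frob_rank1 M x y : frob M (x *m y^T) = bf M y x.
Proof.
by rewrite /frob /bf mulmxA mxtrace_mulC mulmxA trace_mx11.
Qed.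

Lemma bf_rank1 x y z w : bf (x *m y^T) z w = (z^T *m x) 0 0 * (y^T *m w) 0 0.
Proof.
rewrite /bf !mulmxA -(mulmxA (z^T *m x)) [z^T *m x]mx11_scalar.
by rewrite mul_scalar_mx !mxE eqxx mulr1n.
Qed.

Definition dot x y : R := (x^T *m y) 0 0.
Lemma dotC x y : dot x y = dot y x.
Proof. rewrite /dot; transitivity ((x^T *m y)^T 0 0); first by rewrite [RHS]mxE.
by rewrite trmx_mul trmxK. Qed.
Lemma dot_sq x : dot x x = \sum_i x i 0 ^+ 2.
Proof. by rewrite /dot mxE; apply: eq_bigr => i _; rewrite mxE expr2. Qed.
Lemma dot_ge0 x : 0 <= dot x x.
Proof. by rewrite dot_sq sumr_ge0 // => i _; rewrite sqr_ge0. Qed.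
Lemma dot_eq0 x : dot x x = 0 -> x = 0.
Proof.
rewrite dot_sq => /eqP; rewrite psumr_eq0 => [/allP H|i _]; last by rewrite sqr_ge0.
apply/matrixP => i j; rewrite (ord1 j) mxE.
by have := H i (mem_index_enum _); rewrite sqrf_eq0 => /eqP.
Qed.
End Basics.

From mathcomp Require Import all_boot all_order all_algebra.
From mathcomp Require Import reals.
From mathcomp Require Import ring lra.
Import Order.TTheory GRing.Theory Num.Theory.
Local Open Scope ring_scope.
Set Implicit Arguments. Unset Strict Implicit. Unset Printing Implicit Defensive.

Section Viol.
Variable (R : realType) (n : nat) (M1 M2 : 'M[R]_n).
Hypothesis (sM1 : M1^T = M1) (sM2 : M2^T = M2).
Implicit Types (x y z f g : 'cV[R]_n) (M A B : 'M[R]_n).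

Definition det2 (a1 a2 b1 b2 : R) := a1 * b2 - a2 * b1.

Definition viol f g :=
  (det2 (bf M1 f f) (bf M2 f f) (bf M1 g g) (bf M2 g g)) ^+ 2 <
  4 * det2 (bf M1 f f) (bf M2 f f) (bf M1 f g) (bf M2 f g)
    * det2 (bf M1 f g) (bf M2 f g) (bf M1 g g) (bf M2 g g).

Lemma frobD M A B : frob M (A + B) = frob M A + frob M B.
Proof. by rewrite /frob mulmxDr mxtraceD. Qed.
Lemma frobZ M a A : frob M (a *: A) = a * frob M A.
Proof. by rewrite /frob -scalemxAr mxtraceZ. Qed.
Lemma frob_bf M x : frob M (x *m x^T) = bf M x x.
Proof. exact: frob_rank1. Qed.

Lemma bf1 x y : bf 1%:M x y = dot x y.
Proof. by rewrite /bf /dot mulmx1. Qed.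

Lemma mx11_dot x y : x^T *m y = (dot x y)%:M.
Proof. exact: mx11_scalar. Qed.

Lemma bf_tr (E : 'M[R]_n) x : bf (E^T *m E) x x = dot (E *m x) (E *m x).
Proof. by rewrite /bf /dot trmx_mul !mulmxA. Qed.

Lemma frob_sum M I (r : seq I) (P : pred I) (F : I -> 'M[R]_n) :
  frob M (\sum_(i <- r | P i) F i) = \sum_(i <- r | P i) frob M (F i).
Proof.
apply: (big_morph (frob M) (frobD M)).
by rewrite /frob mulmx0 mxtrace0.
Qed.

Lemma bfM0 x y : bf 0 x y = 0.
Proof. by rewrite /bf mulmx0 mul0mx mxE. Qed.

Lemma sym_comb (a b c : R) f g :
  (a *: (f *m f^T) + b *: (f *m g^T + g *m f^T) + c *: (g *m g^T))^T =
  a *: (f *m f^T) + b *: (f *m g^T + g *m f^T) + c *: (g *m g^T).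
Proof.
apply/matrixP => i j; rewrite !mxE !big_ord1 !mxE; ring.
Qed.

Lemma VL f g : viol f g -> ~ ROG (Tcone M1 M2).
Proof.
rewrite /viol.
set p1 := bf M1 f f; set p2 := bf M2 f f; set r1 := bf M1 g g; set r2 := bf M2 g g.
set b1 := bf M1 f g; set b2 := bf M2 f g.
set d0 := det2 p1 p2 r1 r2; set d1 := det2 b1 b2 r1 r2; set d2 := det2 p1 p2 b1 b2.
move=> Hv HROG.
have d12 : 0 < d1 * d2.
  have : 0 <= d0 ^+ 2 by apply: sqr_ge0.
  move: Hv; rewrite -mulrA; lra.
pose sg : R := if 0 < d1 then 1 else -1.
have sg2 : sg * sg = 1 by rewrite /sg; case: ifP => _; ring.
have sgd1 : 0 < sg * d1.
  rewrite /sg; case: ifP => H; first by rewrite mul1r.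
  have : d1 != 0 by apply/eqP => E; move: d12; rewrite E mul0r ltxx.
  move: H; rewrite mulN1r oppr_gt0 => /negbT; rewrite -leNgt le_eqVlt => /orP[/eqP->|//].
  by rewrite eqxx.
pose z11 := sg * 2 * d1; pose z12 := - sg * d0; pose z22 := sg * 2 * d2.
have z11p : 0 < z11 by rewrite /z11 mulrAC; apply: mulr_gt0 => //; lra.
have zdet : z12 ^+ 2 < z11 * z22.
  rewrite /z11 /z12 /z22.
  have -> : (- sg * d0) ^+ 2 = sg * sg * d0 ^+ 2 by ring.
  have -> : sg * 2 * d1 * (sg * 2 * d2) = sg * sg * (4 * d2 * d1) by ring.
  by rewrite sg2 !mul1r.
pose X := z11 *: (f *m f^T) + z12 *: (f *m g^T + g *m f^T) + z22 *: (g *m g^T).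
have bfX : forall x, bf X x x = z11 * (dot f x) ^+ 2 + 2 * z12 * dot f x * dot g x
                              + z22 * (dot g x) ^+ 2.
  move=> x; rewrite /X !bfMD !bfMZ !bfMD !bf_rank1.
  rewrite -/(dot x f) -/(dot f x) -/(dot x g) -/(dot g x) (dotC x f) (dotC x g); ring.
have TX : Tcone M1 M2 X.
  split; [split|].
  - exact: sym_comb.
  - move=> x; rewrite -/(bf X x x) bfX.
    have H1 : 0 <= z11 * (z11 * dot f x ^+ 2 + 2 * z12 * dot f x * dot g x + z22 * dot g x ^+ 2).
      have -> : z11 * (z11 * dot f x ^+ 2 + 2 * z12 * dot f x * dot g x + z22 * dot g x ^+ 2)
        = (z11 * dot f x + z12 * dot g x) ^+ 2 + (z11 * z22 - z12 ^+ 2) * dot g x ^+ 2 by ring.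
      apply: addr_ge0; first exact: sqr_ge0.
      apply: mulr_ge0; [lra | exact: sqr_ge0].
    by move: H1; rewrite pmulr_rge0.
  - have frobX : forall M, M^T = M -> frob M X =
       z11 * bf M f f + 2 * z12 * bf M f g + z22 * bf M g g.
      move=> M sM; rewrite /X !frobD !frobZ !frobD !frob_rank1 (bf_sym _ _ sM); ring.
    rewrite !frobX // /z11 /z12 /z22 -/p1 -/p2 -/r1 -/r2 -/b1 -/b2 /d0 /d1 /d2 /det2.
    split; ring.
have [kk [w [u [w0 [w1 [Tu EX]]]]]] := (proj1 (HROG X) TX).
have qu : forall i, bf M1 (u i) (u i) = 0 /\ bf M2 (u i) (u i) = 0.
  move=> i; have [_ [H1 H2]] := Tu i.
  by rewrite -!frob_bf.
pose a := dot f f; pose b := dot f g; pose c := dot g g; pose gr := a * c - b ^+ 2.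
have dotE : forall x y, dot x y = bf 1%:M x y by move=> x y; rewrite bf1.
have Hgr : gr != 0.
  apply/eqP => G.
  have Hd1 : d1 = 0.
    case: (eqVneq c 0) => [c0 | cn0].
    - have g0 : g = 0 by apply: dot_eq0.
      by rewrite /d1 /b1 /b2 /r1 /r2 g0 !bf0r /det2; ring.
    - pose v := c *: f - b *: g.
      have vv : dot v v = c * gr.
        rewrite /v !dotE bfBl !bfBr !bfZl !bfZr -!dotE (dotC g f) /gr /a /b /c; ring.
      have v0 : v = 0 by apply: dot_eq0; rewrite vv G mulr0.
      have cfbg : c *: f = b *: g by apply/eqP; rewrite -subr_eq0; apply/eqP.
      have e1 : c * b1 = b * r1 by rewrite /b1 /r1 -!bfZl cfbg.
      have e2 : c * b2 = b * r2 by rewrite /b2 /r2 -!bfZl cfbg.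
      have : c * d1 = 0 by rewrite /d1 /det2 mulrBr !mulrA e1 e2; ring.
      by move/eqP; rewrite mulf_eq0 (negbTE cn0) /= => /eqP.
  by move: d12; rewrite Hd1 mul0r ltxx.
pose l1 := gr^-1 *: (c *: f - b *: g).
pose l2 := gr^-1 *: (a *: g - b *: f).
have l1f : dot l1 f = 1.
  rewrite /l1 !dotE bfZl bfBl !bfZl -!dotE (dotC g f) -/a -/b.
  by rewrite -expr2 mulrC [c * a]mulrC -/gr mulfV.
have l1g : dot l1 g = 0.
  rewrite /l1 !dotE bfZl bfBl !bfZl -!dotE -/c -/b; rewrite mulrC; ring.
have l2f : dot l2 f = 0.
  rewrite /l2 !dotE bfZl bfBl !bfZl -!dotE (dotC g f) -/a -/b; ring.
have l2g : dot l2 g = 1.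
  rewrite /l2 !dotE bfZl bfBl !bfZl -!dotE -/c -/b.
  by rewrite -expr2 -/gr mulVf.
pose E := 1%:M - f *m l1^T - g *m l2^T.
have Ex : forall x, E *m x = x - dot l1 x *: f - dot l2 x *: g.
  move=> x; rewrite /E !mulmxBl mul1mx -!mulmxA !mx11_dot !mul_mx_scalar.
  done.
have Ef : E *m f = 0 by rewrite Ex l1f l2f scale1r scale0r subrr subr0.
have Eg : E *m g = 0 by rewrite Ex l1g l2g scale1r scale0r subr0 subrr.
pose W := E^T *m E.
have bfW : forall x y, bf W x y = dot (E *m x) (E *m y).
  by move=> x y; rewrite /bf /dot /W trmx_mul !mulmxA.
have frobWX : frob W X = 0.
  rewrite /X !frobD !frobZ !frobD !frob_rank1 !bfW Ef Eg.
  rewrite -!bf1 ?bf0l ?bf0r; ring.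
have sum0 : \sum_(i < kk) w i * bf W (u i) (u i) = 0.
  rewrite -[RHS]frobWX EX frob_sum; apply: eq_bigr => i _.
  by rewrite frobZ frob_bf.
have Wge0 : forall i, (i \in 'I_kk) -> 0 <= w i * bf W (u i) (u i).
  by move=> i _; rewrite bfW; apply: mulr_ge0 => //; apply: dot_ge0.
have term0 := psumr_eq0P Wge0 sum0.
have u0 : forall i, w i != 0 -> u i = 0.
  move=> i wn0.
  have Eu : E *m u i = 0.
    apply: dot_eq0; have := term0 i isT; rewrite bfW.
    by move/eqP; rewrite mulf_eq0 (negbTE wn0) /= => /eqP.
  set s := dot l1 (u i); set t := dot l2 (u i).
  have ue : u i = s *: f + t *: g.
    by apply/eqP; move: Eu; rewrite Ex -addrA -opprD => /eqP; rewrite subr_eq0.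
  have [q1 q2] := qu i.
  have bfu : forall M, M^T = M -> bf M (u i) (u i) =
      s ^+ 2 * bf M f f + 2 * s * t * bf M f g + t ^+ 2 * bf M g g.
    move=> M sM; rewrite ue !bfDl !bfDr !bfZl !bfZr (bf_sym g f sM); ring.
  move: q1 q2; rewrite !bfu // -/p1 -/p2 -/r1 -/r2 -/b1 -/b2 => q1 q2.
  have e0 : s ^+ 2 * d0 + 2 * s * t * d1 =
     r2 * (s ^+ 2 * p1 + 2 * s * t * b1 + t ^+ 2 * r1)
     - r1 * (s ^+ 2 * p2 + 2 * s * t * b2 + t ^+ 2 * r2) by rewrite /d0 /d1 /det2; ring.
  have e1 : 2 * s * t * d2 + t ^+ 2 * d0 =
     p1 * (s ^+ 2 * p2 + 2 * s * t * b2 + t ^+ 2 * r2)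
     - p2 * (s ^+ 2 * p1 + 2 * s * t * b1 + t ^+ 2 * r1) by rewrite /d0 /d2 /det2; ring.
  have e2 : s ^+ 2 * d2 - t ^+ 2 * d1 =
     b2 * (s ^+ 2 * p1 + 2 * s * t * b1 + t ^+ 2 * r1)
     - b1 * (s ^+ 2 * p2 + 2 * s * t * b2 + t ^+ 2 * r2) by rewrite /d1 /d2 /det2; ring.
  rewrite q1 q2 !mulr0 subrr in e0 e1 e2.
  have d1n : d1 != 0 by apply/eqP => E0; move: d12; rewrite E0 mul0r ltxx.
  have d2n : d2 != 0 by apply/eqP => E0; move: d12; rewrite E0 mulr0 ltxx.
  have st0 : s * t = 0.
    have h : (s * t) ^+ 2 * (4 * d1 * d2 - d0 ^+ 2) = 0.
      have -> : (s * t) ^+ 2 * (4 * d1 * d2 - d0 ^+ 2) =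
        (2 * s * t * d1) * (2 * s * t * d2) - (s ^+ 2 * d0) * (t ^+ 2 * d0) by ring.
      have -> : s ^+ 2 * d0 = - (2 * s * t * d1) by apply/eqP; rewrite -subr_eq0 opprK e0.
      have -> : t ^+ 2 * d0 = - (2 * s * t * d2) by apply/eqP; rewrite -subr_eq0 opprK addrC e1.
      ring.
    move/eqP: h; rewrite mulf_eq0 => /orP[|]; first by rewrite sqrf_eq0 => /eqP.
    by move=> /eqP h; move: Hv; rewrite -h; lra.
  have s0t0 : s = 0 /\ t = 0.
    move/eqP: st0; rewrite mulf_eq0 => /orP[/eqP s0|/eqP t0].
    - split => //; move: e2; rewrite s0 expr0n /= mul0r sub0r => /eqP.
      by rewrite oppr_eq0 mulf_eq0 (negbTE d1n) orbF sqrf_eq0 => /eqP.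
    - split => //; move: e2; rewrite t0 expr0n /= mul0r subr0 => /eqP.
      by rewrite mulf_eq0 (negbTE d2n) orbF sqrf_eq0 => /eqP.
  by rewrite ue (proj1 s0t0) (proj2 s0t0) !scale0r addr0.
have X0 : X = 0.
  rewrite EX big1 // => i _.
  case: (eqVneq (w i) 0) => [->|wn]; first by rewrite scale0r.
  by rewrite u0 // mul0mx scaler0.
have := bfX l1; rewrite X0 bfM0 (dotC f l1) (dotC g l1) l1f l1g.
move=> /eqP; rewrite eq_sym; apply/negP.
have -> : z11 * 1 ^+ 2 + 2 * z12 * 1 * 0 + z22 * 0 ^+ 2 = z11 by ring.
by rewrite gt_eqF.
Qed.

End Viol.

From mathcomp Require Import all_boot all_order all_algebra.
From mathcomp Require Import reals.
From mathcomp Require Import ring lra.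
Import Order.TTheory GRing.Theory Num.Theory.
Local Open Scope ring_scope.
Set Implicit Arguments. Unset Strict Implicit. Unset Printing Implicit Defensive.

Lemma poly_pos (R : realType) (c1 c2 c3 c4 : R) : c1 != 0 ->
  exists d : R, 0 < c1 * d + c2 * d ^+ 2 + c3 * d ^+ 3 + c4 * d ^+ 4.
Proof.
move=> c1n.
pose a2 := `|c2|; pose a3 := `|c3 * c1|; pose a4 := `|c4 * c1 ^+ 2|.
pose K := 1 + a2 + a3 + a4.
have a2p : 0 <= a2 by apply: normr_ge0.
have a3p : 0 <= a3 by apply: normr_ge0.
have a4p : 0 <= a4 by apply: normr_ge0.
have h2 : - a2 <= c2 by rewrite lerNl; apply: (le_trans (ler_norm _)); rewrite normrN.
have h3 : - a3 <= c3 * c1 by rewrite lerNl; apply: (le_trans (ler_norm _)); rewrite normrN.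
have h4 : - a4 <= c4 * c1 ^+ 2 by rewrite lerNl; apply: (le_trans (ler_norm _)); rewrite normrN.
have K1 : 1 <= K by rewrite /K; lra.
have Kn : K != 0 by apply/eqP => K0; move: K1; rewrite K0; lra.
exists (c1 / K).
have -> : c1 * (c1 / K) + c2 * (c1 / K) ^+ 2 + c3 * (c1 / K) ^+ 3 + c4 * (c1 / K) ^+ 4
  = (c1 ^+ 2 / K ^+ 4) * (K ^+ 3 + c2 * K ^+ 2 + (c3 * c1) * K + c4 * c1 ^+ 2).
  by field.
apply: mulr_gt0.
  apply: divr_gt0; first by rewrite lt_def sqr_ge0 andbT sqrf_eq0 c1n.
  by apply: exprn_gt0; lra.
have hK : K ^+ 2 * (K - a2 - a3 - a4) <= K ^+ 3 + c2 * K ^+ 2 + c3 * c1 * K + c4 * c1 ^+ 2.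
  have hKK : K <= K ^+ 2 by rewrite expr2; nra.
  nra.
apply: (lt_le_trans _ hK); rewrite /K.
have -> : 1 + a2 + a3 + a4 - a2 - a3 - a4 = 1 by ring.
by rewrite mulr1 exprn_gt0 //; lra.
Qed.

Section LemX.
Variable (R : realType) (n : nat) (M1 M2 : 'M[R]_n).
Hypothesis (sM1 : M1^T = M1) (sM2 : M2^T = M2).
Implicit Types (x y z f g k : 'cV[R]_n).

Lemma lemX k y z :
  bf M1 k k = 0 -> bf M2 k k = 0 ->
  det2 (bf M1 y y) (bf M2 y y) (bf M1 k y) (bf M2 k y) != 0 ->
  det2 (bf M1 k y) (bf M2 k y) (bf M1 k z) (bf M2 k z) != 0 ->
  exists d : R, viol M1 M2 y (k + d *: z).
Proof.
move=> qk1 qk2 h1 h2.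
set p1 := bf M1 y y; set p2 := bf M2 y y.
set P1 := bf M1 k y; set P2 := bf M2 k y.
set e1 := bf M1 k z; set e2 := bf M2 k z.
set dd1 := bf M1 y z; set dd2 := bf M2 y z.
set s1 := bf M1 z z; set s2 := bf M2 z z.
pose a0 := det2 p1 p2 P1 P2; pose a1 := det2 p1 p2 dd1 dd2.
pose be1 := 2 * det2 P1 P2 e1 e2.
pose be2 := det2 P1 P2 s1 s2 + 2 * det2 dd1 dd2 e1 e2.
pose be3 := det2 dd1 dd2 s1 s2.
pose g1 := 2 * det2 p1 p2 e1 e2; pose g2 := det2 p1 p2 s1 s2.
have c1n : 4 * a0 * be1 != 0.
  by rewrite /be1 !mulf_neq0 // ?pnatr_eq0.
have [d Hd] := poly_pos (4 * a0 * be2 + 4 * a1 * be1 - g1 ^+ 2)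
   (4 * a0 * be3 + 4 * a1 * be2 - 2 * g1 * g2) (4 * a1 * be3 - g2 ^+ 2) c1n.
exists d; rewrite /viol -subr_gt0.
have Eb : forall M, M^T = M -> bf M y (k + d *: z) = bf M k y + d * bf M y z.
  by move=> M sM; rewrite bfDr bfZr (bf_sym y k sM).
have Er : forall M, M^T = M -> bf M k k = 0 ->
    bf M (k + d *: z) (k + d *: z) = 2 * d * bf M k z + d ^+ 2 * bf M z z.
  by move=> M sM qk; rewrite !bfDl !bfDr !bfZl !bfZr qk (bf_sym z k sM); ring.
rewrite !Eb // !Er // -/p1 -/p2 -/P1 -/P2 -/e1 -/e2 -/dd1 -/dd2 -/s1 -/s2.
move: Hd; rewrite /a0 /a1 /be1 /be2 /be3 /g1 /g2 /det2.
set L := (X in 0 < X -> _); set Rr := (X in _ -> 0 < X).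
suff -> : Rr = L by [].
rewrite /L /Rr; ring.
Qed.

Lemma lemXall k y1 y2 :
  ROG (Tcone M1 M2) ->
  bf M1 k k = 0 -> bf M2 k k = 0 ->
  det2 (bf M1 k y1) (bf M2 k y1) (bf M1 k y2) (bf M2 k y2) != 0 ->
  forall y, det2 (bf M1 y y) (bf M2 y y) (bf M1 k y) (bf M2 k y) = 0.
Proof.
move=> HROG qk1 qk2 hD y.
have [//|hy] := eqVneq (det2 (bf M1 y y) (bf M2 y y) (bf M1 k y) (bf M2 k y)) 0.
exfalso.
have noviol : forall z, det2 (bf M1 k y) (bf M2 k y) (bf M1 k z) (bf M2 k z) = 0.
  move=> z.
  have [//|hz] := eqVneq (det2 (bf M1 k y) (bf M2 k y) (bf M1 k z) (bf M2 k z)) 0.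
  have [d Hd] := lemX qk1 qk2 hy hz.
  by exfalso; exact: (VL sM1 sM2 Hd HROG).
have h1 := noviol y1; have h2 := noviol y2.
move: hD hy h1 h2; rewrite /det2.
set a1 := bf M1 k y1; set a2 := bf M2 k y1; set b1 := bf M1 k y2; set b2 := bf M2 k y2.
set P1 := bf M1 k y; set P2 := bf M2 k y.
move=> hD hy h1 h2.
have eP1 : (a1 * b2 - a2 * b1) * P1 = 0.
  have -> : (a1 * b2 - a2 * b1) * P1 = (P1 * b2 - P2 * b1) * a1 - (P1 * a2 - P2 * a1) * b1 by ring.
  by rewrite h1 h2; ring.
have eP2 : (a1 * b2 - a2 * b1) * P2 = 0.
  have -> : (a1 * b2 - a2 * b1) * P2 = (P1 * b2 - P2 * b1) * a2 - (P1 * a2 - P2 * a1) * b2 by ring.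
  by rewrite h1 h2; ring.
move/eqP: eP1; rewrite mulf_eq0 (negbTE hD) /= => /eqP eP1.
move/eqP: eP2; rewrite mulf_eq0 (negbTE hD) /= => /eqP eP2.
by move: hy; rewrite eP1 eP2 !mulr0 subrr eqxx.
Qed.
End LemX.

From mathcomp Require Import all_boot all_order all_algebra.
From mathcomp Require Import reals.
From mathcomp Require Import ring lra.
Import Order.TTheory GRing.Theory Num.Theory.
Local Open Scope ring_scope.
Set Implicit Arguments. Unset Strict Implicit. Unset Printing Implicit Defensive.

Section Quad.
Variable (R : realType) (n : nat).
Implicit Types (x y z : 'cV[R]_n) (M N : 'M[R]_n).

Lemma bf_delta M i j : bf M (delta_mx i 0) (delta_mx j 0) = M i j.
Proof. by rewrite /bf trmx_delta -rowE -colE !mxE. Qed.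

Lemma quad_eq M N : M^T = M -> N^T = N ->
  (forall y, bf M y y = bf N y y) -> M = N.
Proof.
move=> sM sN H; apply/matrixP => i j.
rewrite -!bf_delta.
set u := delta_mx i 0 : 'cV[R]_n; set v := delta_mx j 0 : 'cV[R]_n.
have pol : forall K, K^T = K -> bf K u v = 2^-1 * (bf K (u + v) (u + v) - bf K u u - bf K v v).
  move=> K sK; rewrite !bfDl !bfDr (bf_sym v u sK).
  have -> : bf K u u + bf K u v + (bf K u v + bf K v v) - bf K u u - bf K v v = 2 * bf K u v by ring.
  by rewrite mulrA mulVf ?mul1r // pnatr_eq0.
by rewrite (pol M sM) (pol N sN) !H.
Qed.

Lemma Symm_sym (a c : 'cV[R]_n) : (Symm (a *m c^T))^T = Symm (a *m c^T).
Proof. by rewrite /Symm linearZ /= linearD /= trmxK addrC. Qed.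

Lemma bf_Symm (a c : 'cV[R]_n) y : bf (Symm (a *m c^T)) y y = dot a y * dot c y.
Proof.
rewrite /Symm bfMZ bfMD trmx_mul trmxK !bf_rank1.
rewrite -/(dot y a) -/(dot c y) -/(dot y c) -/(dot a y) (dotC y a) (dotC y c).
have -> : dot a y * dot c y + dot c y * dot a y = 2 * (dot a y * dot c y) by ring.
by rewrite mulrA mulVf ?mul1r // pnatr_eq0.
Qed.
End Quad.

Section Factor.
Variable (R : realType) (n : nat) (M1 M2 : 'M[R]_n).
Hypothesis (sM1 : M1^T = M1) (sM2 : M2^T = M2).
Implicit Types (x y z f g k : 'cV[R]_n).

Lemma poly3 (A B C : R) : (forall t : R, t != 0 -> A + t * B + t ^+ 2 * C = 0) ->
  A = 0 /\ B = 0 /\ C = 0.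
Proof.
move=> H.
have h1 := H 1 (oner_neq0 _).
have n1 : (-1 : R) != 0 by rewrite oppr_eq0 oner_eq0.
have n2 : (2 : R) != 0 by rewrite pnatr_eq0.
have h2 := H (-1) n1.
have h3 := H 2 n2.
move: h1 h2 h3; rewrite !expr2 => h1 h2 h3.
split; [|split]; lra.
Qed.

Lemma bf_exp3 M z e f (s t : R) : M^T = M ->
  bf M (z + s *: e + t *: f) (z + s *: e + t *: f) =
  bf M z z + s ^+ 2 * bf M e e + t ^+ 2 * bf M f f + 2 * s * bf M e z
  + 2 * t * bf M f z + 2 * s * t * bf M e f.
Proof.
move=> sM; rewrite !bfDl !bfDr !bfZl !bfZr (bf_sym z e sM) (bf_sym z f sM) (bf_sym f e sM).
ring.
Qed.

Lemma bf_lin3 M x z e f (s t : R) :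
  bf M x (z + s *: e + t *: f) = bf M x z + s * bf M x e + t * bf M x f.
Proof. by rewrite !bfDr !bfZr. Qed.

Lemma factor k y1 y2 :
  det2 (bf M1 k y1) (bf M2 k y1) (bf M1 k y2) (bf M2 k y2) != 0 ->
  (forall y, det2 (bf M1 y y) (bf M2 y y) (bf M1 k y) (bf M2 k y) = 0) ->
  exists c : 'cV[R]_n, forall y,
    bf M1 y y = dot (M1 *m k) y * dot c y /\ bf M2 y y = dot (M2 *m k) y * dot c y.
Proof.
move=> hD H.
have dMk : forall M, M^T = M -> forall x y, dot (M *m x) y = bf M x y.
  by move=> M sM x y; rewrite /dot /bf trmx_mul sM.
set D := det2 _ _ _ _ in hD.
pose e := D^-1 *: (bf M2 k y2 *: y1 - bf M2 k y1 *: y2).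
pose f := D^-1 *: (bf M1 k y1 *: y2 - bf M1 k y2 *: y1).
have L1e : bf M1 k e = 1.
  rewrite /e bfZr bfBr !bfZr.
  have -> : bf M2 k y2 * bf M1 k y1 - bf M2 k y1 * bf M1 k y2 = D by rewrite /D /det2; ring.
  by rewrite mulVf.
have L2e : bf M2 k e = 0.
  by rewrite /e bfZr bfBr !bfZr [bf M2 k y2 * _]mulrC subrr mulr0.
have L1f : bf M1 k f = 0.
  by rewrite /f bfZr bfBr !bfZr [bf M1 k y1 * _]mulrC subrr mulr0.
have L2f : bf M2 k f = 1.
  rewrite /f bfZr bfBr !bfZr.
  have -> : bf M1 k y1 * bf M2 k y2 - bf M1 k y2 * bf M2 k y1 = D by rewrite /D /det2; ring.
  by rewrite mulVf.
clearbody e f.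
have HH : forall z (s t : R), bf M1 k z = 0 -> bf M2 k z = 0 ->
    (bf M1 (z + s *: e + t *: f) (z + s *: e + t *: f)) * t
  - (bf M2 (z + s *: e + t *: f) (z + s *: e + t *: f)) * s = 0.
  move=> z s t z1 z2; have := H (z + s *: e + t *: f); rewrite /det2 !bf_lin3.
  by rewrite z1 z2 L1e L2e L1f L2f; move=> <-; congr (_ * _ - _ * _); ring.
have F1 : forall z, bf M1 k z = 0 -> bf M2 k z = 0 ->
    ((bf M1 z z = 0 /\ bf M1 f z = 0 /\ bf M1 f f = 0) /\
     (bf M2 z z = 0 /\ bf M2 e z = 0 /\ bf M2 e e = 0)).
  move=> z z1 z2.
  have [a1 [a2 a3]] : bf M1 z z = 0 /\ 2 * bf M1 f z = 0 /\ bf M1 f f = 0.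
    apply: poly3 => t tn; have := HH z 0 t z1 z2.
    rewrite !bf_exp3 // => E0.
    have : (bf M1 z z + t * (2 * bf M1 f z) + t ^+ 2 * bf M1 f f) * t = 0.
      by rewrite -[RHS]E0; ring.
    by move/eqP; rewrite mulf_eq0 (negbTE tn) orbF => /eqP.
  have [b1 [b2 b3]] : bf M2 z z = 0 /\ 2 * bf M2 e z = 0 /\ bf M2 e e = 0.
    apply: poly3 => s sn; have := HH z s 0 z1 z2.
    rewrite !bf_exp3 // => E0.
    have : (bf M2 z z + s * (2 * bf M2 e z) + s ^+ 2 * bf M2 e e) * s = 0.
      by rewrite -[RHS]oppr0 -[in RHS]E0; ring.
    by move/eqP; rewrite mulf_eq0 (negbTE sn) orbF => /eqP.
  split; (split; [done|split; [|done]]).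
  - by move/eqP: a2; rewrite mulf_eq0 pnatr_eq0 /= => /eqP.
  - by move/eqP: b2; rewrite mulf_eq0 pnatr_eq0 /= => /eqP.
have F2 : forall z, bf M1 k z = 0 -> bf M2 k z = 0 ->
   [/\ bf M1 e e - 2 * bf M2 e f = 0, 2 * bf M1 e f - bf M2 f f = 0
     & bf M1 e z - bf M2 f z = 0].
  move=> z z1 z2.
  have [[a1 [a2 a3]] [b1 [b2 b3]]] := F1 z z1 z2.
  have key : forall s t : R, s * t * (s * (bf M1 e e - 2 * bf M2 e f)
       + t * (2 * bf M1 e f - bf M2 f f) + 2 * (bf M1 e z - bf M2 f z)) = 0.
    move=> s t; have := HH z s t z1 z2; rewrite !bf_exp3 // a1 a2 a3 b1 b2 b3 => E0.
    by rewrite -[RHS]E0; ring.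
  have k1 := key 1 1; have k2 := key (-1) 1; have k3 := key 1 (-1).
  move: k1 k2 k3; set A' := bf M1 e e - _; set B' := 2 * _ - _; set C' := bf M1 e z - _.
  move=> k1 k2 k3.
  have k1' : A' + B' + 2 * C' = 0 by rewrite -[RHS]k1; ring.
  have k2' : A' - B' - 2 * C' = 0 by rewrite -[RHS]k2; ring.
  have k3' : - A' + B' - 2 * C' = 0 by rewrite -[RHS]k3; ring.
  split; lra.
have z0a : bf M1 k 0 = 0 by rewrite bf0r.
have z0b : bf M2 k 0 = 0 by rewrite bf0r.
have [FA FB _] := F2 0 z0a z0b.
pose c := 2 *: (M1 *m e) - bf M1 e e *: (M1 *m k).
have dotc : forall y, dot c y = 2 * bf M1 e y - bf M1 e e * bf M1 k y.
  move=> y; rewrite -bf1 /c bfBl !bfZl !bf1 !dMk //.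
exists c; move=> y.
set s := bf M1 k y; set t := bf M2 k y.
pose z := y - s *: e - t *: f.
have z1 : bf M1 k z = 0 by rewrite /z !bfBr !bfZr L1e L1f -/s; ring.
have z2 : bf M2 k z = 0 by rewrite /z !bfBr !bfZr L2e L2f -/t; ring.
have ye : y = z + s *: e + t *: f by rewrite /z addrAC subrK subrK.
have [[a1 [a2 a3]] [b1 [b2 b3]]] := F1 z z1 z2.
have [_ _ FC] := F2 z z1 z2.
rewrite !dMk // -/s -/t dotc.
have B1ey : bf M1 e y = bf M1 e z + s * bf M1 e e + t * bf M1 e f by rewrite {1}ye bf_lin3.
have Q1y : bf M1 y y = bf M1 z z + s ^+ 2 * bf M1 e e + t ^+ 2 * bf M1 f f + 2 * s * bf M1 e z
  + 2 * t * bf M1 f z + 2 * s * t * bf M1 e f by rewrite ye bf_exp3.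
have Q2y : bf M2 y y = bf M2 z z + s ^+ 2 * bf M2 e e + t ^+ 2 * bf M2 f f + 2 * s * bf M2 e z
  + 2 * t * bf M2 f z + 2 * s * t * bf M2 e f by rewrite ye bf_exp3.
have FA' : bf M1 e e = 2 * bf M2 e f by lra.
have FB' : bf M2 f f = 2 * bf M1 e f by lra.
have FC' : bf M2 f z = bf M1 e z by lra.
rewrite Q1y Q2y B1ey a1 a2 a3 b1 b2 b3 FB' FC' FA' -/s; split; ring.
Qed.
End Factor.

From mathcomp Require Import all_boot all_order all_algebra.
From mathcomp Require Import classical_sets reals.
From mathcomp Require Import ring lra.
From Stdlib Require Import Classical.
Import Order.TTheory GRing.Theory Num.Theory.
Local Open Scope ring_scope.
Set Implicit Arguments. Unset Strict Implicit. Unset Printing Implicit Defensive.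

Lemma aux_le (R : realType) (a a' y y' : R) : 0 < y -> y' < 0 ->
  a * y * (- y') + a' * y' * y <= 0 -> a <= a'.
Proof. move=> hy hy' h; have : 0 < y * (- y') by apply: mulr_gt0; lra. nra. Qed.

Lemma aux_neg (R : realType) (sg a y : R) : y < 0 -> sg <= a -> sg * y - a * y < 0 -> False.
Proof. move=> hy ha h; nra. Qed.

Lemma aux_pos (R : realType) (sg a y : R) : 0 < y -> a <= sg -> sg * y - a * y < 0 -> False.
Proof. move=> hy ha h; nra. Qed.

Section Cone.
Variable (R : realType) (S : R -> R -> Prop).
Hypothesis NI : forall l1 l2 : R, (l1 != 0) || (l2 != 0) ->
  exists s1 s2, S s1 s2 /\ l1 * s1 + l2 * s2 < 0.

Lemma cone2 (w1 w2 : R) : exists a1 a2 b1 b2 mu nu, S a1 a2 /\ S b1 b2 /\ 0 <= mu /\ 0 <= nu /\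
     w1 = mu * a1 + nu * b1 /\ w2 = mu * a2 + nu * b2.
Proof.
have [o1 [o2 [So _]]] : exists s1 s2, S s1 s2 /\ 1 * s1 + 0 * s2 < 0.
  by apply: NI; rewrite oner_neq0.
have [w0|wn] := eqVneq (w1 ^+ 2 + w2 ^+ 2) 0.
  have w10 : w1 = 0 by nra.
  have w20 : w2 = 0 by nra.
  by exists o1, o2, o1, o2, 0, 0; rewrite w10 w20; split=> //; split=> //; split=> //; split => //; split; ring.
have wp : 0 < w1 ^+ 2 + w2 ^+ 2 by rewrite lt_def wn /=; nra.
apply: NNPP => Hn.
pose X (s1 s2 : R) := w1 * s1 + w2 * s2.
pose Y (s1 s2 : R) := w1 * s2 - w2 * s1.
have c0 : forall s1 s2, S s1 s2 -> Y s1 s2 = 0 -> X s1 s2 <= 0.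
  move=> s1 s2 Ss Y0; rewrite leNgt; apply/negP => Xp; apply: Hn.
  exists s1, s2, s1, s2, ((w1 ^+ 2 + w2 ^+ 2) / X s1 s2), 0.
  split=> //; split=> //; split; first by apply: divr_ge0; lra.
  split=> //; move: Y0; rewrite /Y /X => Y0.
  have Xn : w1 * s1 + w2 * s2 != 0 by rewrite /X in Xp; apply/eqP => E0; move: Xp; rewrite E0 ltxx.
  have key1 : (w1 ^+ 2 + w2 ^+ 2) * s1 = w1 * (w1 * s1 + w2 * s2).
    apply/eqP; rewrite -subr_eq0; apply/eqP.
    by transitivity (- w2 * (w1 * s2 - w2 * s1)); [ring | rewrite Y0 mulr0].
  have key2 : (w1 ^+ 2 + w2 ^+ 2) * s2 = w2 * (w1 * s1 + w2 * s2).
    apply/eqP; rewrite -subr_eq0; apply/eqP.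
    by transitivity (w1 * (w1 * s2 - w2 * s1)); [ring | rewrite Y0 mulr0].
  by split; rewrite mul0r addr0 mulrAC ?key1 ?key2 mulfK.
have c1 : forall s1 s2 t1 t2, S s1 s2 -> S t1 t2 -> 0 < Y s1 s2 -> Y t1 t2 < 0 ->
    X s1 s2 * (- Y t1 t2) + X t1 t2 * Y s1 s2 <= 0.
  move=> s1 s2 t1 t2 Ss St Ys Yt; rewrite leNgt; apply/negP => Xp; apply: Hn.
  set G := X s1 s2 * (- Y t1 t2) + X t1 t2 * Y s1 s2 in Xp.
  have Gn : G != 0 by apply/eqP => E0; move: Xp; rewrite E0 ltxx.
  pose g1 := - Y t1 t2 * s1 + Y s1 s2 * t1; pose g2 := - Y t1 t2 * s2 + Y s1 s2 * t2.
  have XG : w1 * g1 + w2 * g2 = G by rewrite /G /g1 /g2 /X /Y; ring.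
  have YG : w1 * g2 - w2 * g1 = 0 by rewrite /g1 /g2 /Y; ring.
  have key1 : (w1 ^+ 2 + w2 ^+ 2) * g1 = w1 * G.
    apply/eqP; rewrite -subr_eq0 -XG; apply/eqP.
    by transitivity (- w2 * (w1 * g2 - w2 * g1)); [ring | rewrite YG mulr0].
  have key2 : (w1 ^+ 2 + w2 ^+ 2) * g2 = w2 * G.
    apply/eqP; rewrite -subr_eq0 -XG; apply/eqP.
    by transitivity (w1 * (w1 * g2 - w2 * g1)); [ring | rewrite YG mulr0].
  exists s1, s2, t1, t2, ((w1 ^+ 2 + w2 ^+ 2) * (- Y t1 t2) / G), ((w1 ^+ 2 + w2 ^+ 2) * Y s1 s2 / G).
  split=> //; split=> //.
  split; first by apply: divr_ge0; [apply: mulr_ge0; lra | lra].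
  split; first by apply: divr_ge0; [apply: mulr_ge0; lra | lra].
  split.
  - have -> : (w1 ^+ 2 + w2 ^+ 2) * - Y t1 t2 / G * s1 + (w1 ^+ 2 + w2 ^+ 2) * Y s1 s2 / G * t1
        = (w1 ^+ 2 + w2 ^+ 2) * g1 / G by rewrite /g1; field.
    by rewrite key1 mulfK.
  - have -> : (w1 ^+ 2 + w2 ^+ 2) * - Y t1 t2 / G * s2 + (w1 ^+ 2 + w2 ^+ 2) * Y s1 s2 / G * t2
        = (w1 ^+ 2 + w2 ^+ 2) * g2 / G by rewrite /g2; field.
    by rewrite key2 mulfK.
have wnz : (w1 != 0) || (w2 != 0).
  rewrite -negb_and; apply/negP => /andP [/eqP h1 /eqP h2]; move: wn.
  by rewrite h1 h2 expr0n /= addr0 eqxx.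
have [[u1 [u2 [Su Yu]]] | noU] :=
  classic (exists s1 s2, S s1 s2 /\ 0 < Y s1 s2).
  have [[v1 [v2 [Sv Yv]]] | noL] :=
    classic (exists s1 s2, S s1 s2 /\ Y s1 s2 < 0).
    pose E : set R := fun x => exists s1 s2, S s1 s2 /\ 0 < Y s1 s2 /\ x = X s1 s2 / Y s1 s2.
    have Eub : forall t1 t2, S t1 t2 -> Y t1 t2 < 0 -> ubound E (X t1 t2 / Y t1 t2).
      move=> t1 t2 St Yt x [s1 [s2 [Ss [Ys ->]]]].
      have h := c1 _ _ _ _ Ss St Ys Yt.
      set a := X s1 s2 / Y s1 s2; set a' := X t1 t2 / Y t1 t2.
      have ha : X s1 s2 = a * Y s1 s2 by rewrite /a divfK // gt_eqF.
      have ha' : X t1 t2 = a' * Y t1 t2 by rewrite /a' divfK // lt_eqF.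
      rewrite ha ha' in h.
      exact: (aux_le Ys Yt h).
    have Ene : nonempty E by exists (X u1 u2 / Y u1 u2), u1, u2.
    have Esup : has_sup E by split => //; exists (X v1 v2 / Y v1 v2); apply: Eub.
    pose sg := sup E.
    have [t1 [t2 [St Ht]]] : exists s1 s2, S s1 s2 /\
        (- sg * w2 - w1) * s1 + (sg * w1 - w2) * s2 < 0.
      apply: NI; rewrite -negb_and; apply/negP => /andP [/eqP h1 /eqP h2].
      have : (- sg * w2 - w1) * w1 + (sg * w1 - w2) * w2 = - (w1 ^+ 2 + w2 ^+ 2) by ring.
      rewrite h1 h2 !mul0r addr0 => /eqP; rewrite eq_sym oppr_eq0 (negbTE wn) //.
    have Ht' : sg * Y t1 t2 - X t1 t2 < 0 by move: Ht; rewrite /X /Y; congr (_ < _); ring.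
    have [Yp|Yn|Y0] := ltgtP (Y t1 t2) 0.
    + have hs : sg <= X t1 t2 / Y t1 t2 by apply: ge_sup => //; apply: Eub.
      have ha : X t1 t2 = (X t1 t2 / Y t1 t2) * Y t1 t2 by rewrite divfK // lt_eqF.
      move: hs Ht'; set a := X t1 t2 / Y t1 t2; rewrite ha => hs Ht'.
      by exfalso; apply: (aux_neg Yp hs Ht').
    + have hs : X t1 t2 / Y t1 t2 <= sg.
        by apply: sup_upper_bound => //; exists t1, t2.
      have ha : X t1 t2 = (X t1 t2 / Y t1 t2) * Y t1 t2 by rewrite divfK // gt_eqF.
      move: hs Ht'; set a := X t1 t2 / Y t1 t2; rewrite ha => hs Ht'.
      by exfalso; apply: (aux_pos Yn hs Ht').
    + have := c0 _ _ St Y0; move: Ht'; rewrite Y0 mulr0; lra.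
  have [t1 [t2 [St Ht]]] : exists s1 s2, S s1 s2 /\ (- w2) * s1 + w1 * s2 < 0.
    apply: NI; move: wnz; rewrite oppr_eq0 orbC //.
  by apply: noL; exists t1, t2; split => //; move: Ht; rewrite /Y; lra.
have [t1 [t2 [St Ht]]] : exists s1 s2, S s1 s2 /\ w2 * s1 + (- w1) * s2 < 0.
  by apply: NI; move: wnz; rewrite oppr_eq0 orbC.
by apply: noU; exists t1, t2; split => //; move: Ht; rewrite /Y; lra.
Qed.
End Cone.

From mathcomp Require Import all_boot all_order all_algebra.
From mathcomp Require Import reals.
From mathcomp Require Import ring lra.
From Stdlib Require Import Classical.
Import Order.TTheory GRing.Theory Num.Theory.
Local Open Scope ring_scope.
Set Implicit Arguments. Unset Strict Implicit. Unset Printing Implicit Defensive.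

Lemma zero2 (R : realType) (P1 P2 x1 x2 R1 R2 : R) :
  det2 P1 P2 x1 x2 = 0 -> det2 x1 x2 R1 R2 = 0 -> det2 P1 P2 R1 R2 != 0 ->
  x1 = 0 /\ x2 = 0.
Proof.
rewrite /det2 => h1 h2 hD.
have e1 : (P1 * R2 - P2 * R1) * x1 = 0.
  by transitivity ((x1 * R2 - x2 * R1) * P1 + (P1 * x2 - P2 * x1) * R1); [ring | rewrite h1 h2; ring].
have e2 : (P1 * R2 - P2 * R1) * x2 = 0.
  by transitivity ((x1 * R2 - x2 * R1) * P2 + (P1 * x2 - P2 * x1) * R2); [ring | rewrite h1 h2; ring].
move/eqP: e1; move/eqP: e2; rewrite !mulf_eq0 (negbTE hD) /= => /eqP -> /eqP ->.
by split.
Qed.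

Section Four.
Variable (R : realType) (n : nat) (M1 M2 : 'M[R]_n).
Hypothesis (sM1 : M1^T = M1) (sM2 : M2^T = M2).
Implicit Types (x y z f g k : 'cV[R]_n).

Definition prof1 x := forall y1 y2,
  det2 (bf M1 x y1) (bf M2 x y1) (bf M1 x y2) (bf M2 x y2) = 0.

Lemma four_viol ua ub uc ue :
  bf M1 ua ua = 0 -> bf M2 ua ua = 0 -> bf M1 ub ub = 0 -> bf M2 ub ub = 0 ->
  bf M1 uc uc = 0 -> bf M2 uc uc = 0 -> bf M1 ue ue = 0 -> bf M2 ue ue = 0 ->
  prof1 ua -> prof1 ub -> prof1 uc -> prof1 ue ->
  det2 (bf M1 ua ub) (bf M2 ua ub) (bf M1 uc ue) (bf M2 uc ue) != 0 ->
  viol M1 M2 (ua + 2 *: ub + 2 *: uc) (- ua + 2 *: ub + 2 *: ue).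
Proof.
move=> a1 a2 b1 b2 c1 c2 e1 e2 pa pb pc pe hD.
have sy1 : forall x y, bf M1 y x = bf M1 x y by move=> x y; apply: bf_sym.
have sy2 : forall x y, bf M2 y x = bf M2 x y by move=> x y; apply: bf_sym.
have [ac1 ac2] : bf M1 ua uc = 0 /\ bf M2 ua uc = 0.
  apply: (zero2 _ _ hD); first exact: pa.
  by have := pc ua ue; rewrite (sy1 ua uc) (sy2 ua uc).
have [ae1 ae2] : bf M1 ua ue = 0 /\ bf M2 ua ue = 0.
  apply: (zero2 _ _ hD); first exact: pa.
  by have := pe ua uc; rewrite (sy1 ua ue) (sy2 ua ue) (sy1 uc ue) (sy2 uc ue).
have [bc1 bc2] : bf M1 ub uc = 0 /\ bf M2 ub uc = 0.
  apply: (zero2 _ _ hD).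
    by have := pb ua uc; rewrite (sy1 ua ub) (sy2 ua ub).
  by have := pc ub ue; rewrite (sy1 ub uc) (sy2 ub uc).
have [be1 be2] : bf M1 ub ue = 0 /\ bf M2 ub ue = 0.
  apply: (zero2 _ _ hD).
    by have := pb ua ue; rewrite (sy1 ua ub) (sy2 ua ub).
  by have := pe ub uc; rewrite (sy1 ub ue) (sy2 ub ue) (sy1 uc ue) (sy2 uc ue).
rewrite /viol !bfDl !bfDr !bfNl !bfNr !bfZl !bfZr.
rewrite ?(sy1 ua ub) ?(sy2 ua ub) ?(sy1 ua uc) ?(sy2 ua uc) ?(sy1 ua ue) ?(sy2 ua ue).
rewrite ?(sy1 ub uc) ?(sy2 ub uc) ?(sy1 ub ue) ?(sy2 ub ue) ?(sy1 uc ue) ?(sy2 uc ue).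
rewrite ?a1 ?a2 ?b1 ?b2 ?c1 ?c2 ?e1 ?e2 ?ac1 ?ac2 ?ae1 ?ae2 ?bc1 ?bc2 ?be1 ?be2.
move: hD; rewrite /det2.
set P1 := bf M1 ua ub; set P2 := bf M2 ua ub; set R1 := bf M1 uc ue; set R2 := bf M2 uc ue.
move=> hD.
set L := (X in X < _); set Rr := (X in _ < X).
have -> : L = 0 by rewrite /L; ring.
have -> : Rr = 1024 * (P1 * R2 - P2 * R1) ^+ 2 by rewrite /Rr; ring.
by rewrite pmulr_rgt0 // lt_def sqr_ge0 sqrf_eq0 hD.
Qed.

Lemma quad_sum kk (u : 'I_kk -> 'cV[R]_n) (c : 'I_kk -> R) M :
  bf M (\sum_i c i *: u i) (\sum_i c i *: u i) =
  \sum_i \sum_j (c i * c j) * bf M (u i) (u j).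
Proof.
rewrite bf_suml; apply: eq_bigr => i _.
rewrite bfZl bf_sumr mulr_sumr; apply: eq_bigr => j _.
by rewrite bfZr; ring.
Qed.

Lemma par_i kk (u : 'I_kk -> 'cV[R]_n) :
  (forall y, exists c : 'I_kk -> R, y = \sum_i c i *: u i) ->
  (forall i j i' j', det2 (bf M1 (u i) (u j)) (bf M2 (u i) (u j))
                        (bf M1 (u i') (u j')) (bf M2 (u i') (u j')) = 0) ->
  exists a1 a2 : R, (a1, a2) != (0, 0) /\ psdmx (a1 *: M1 + a2 *: M2).
Proof.
move=> span par.
have [D1 [D2 [Dn HD]]] : exists D1 D2 : R, ((D1 != 0) || (D2 != 0)) /\
    forall i j, det2 D1 D2 (bf M1 (u i) (u j)) (bf M2 (u i) (u j)) = 0.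
  have [[i [j hij]] | no] := classic (exists i j,
     (bf M1 (u i) (u j) != 0) || (bf M2 (u i) (u j) != 0)).
    by exists (bf M1 (u i) (u j)), (bf M2 (u i) (u j)); split => // k l; apply: par.
  exists 1, 0; split; first by rewrite oner_neq0.
  move=> k l; have : ~ ((bf M1 (u k) (u l) != 0) || (bf M2 (u k) (u l) != 0)).
    by move=> h; apply: no; exists k, l.
  move/negP; rewrite negb_or !negbK => /andP [/eqP -> /eqP ->].
  by rewrite /det2; ring.
have Hy : forall y, det2 D1 D2 (bf M1 y y) (bf M2 y y) = 0.
  move=> y; have [c ->] := span y.
  rewrite !quad_sum /det2 !mulr_sumr -sumrB big1 // => i _.
  rewrite !mulr_sumr -sumrB big1 // => j _.
  have := HD i j; rewrite /det2 => h.
  by transitivity ((c i * c j) * (D1 * bf M2 (u i) (u j) - D2 * bf M1 (u i) (u j)));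
    [ring | rewrite h mulr0].
exists D2, (- D1); split.
  rewrite xpair_eqE negb_and oppr_eq0; move: Dn; by rewrite orbC.
split.
  by rewrite /symmx linearD /= !linearZ /= sM1 sM2.
move=> x; rewrite -/(bf _ x x) bfMD !bfMZ.
have := Hy x; rewrite /det2 => h.
have -> : D2 * bf M1 x x + - D1 * bf M2 x x = - (D1 * bf M2 x x - D2 * bf M1 x x) by ring.
by rewrite h oppr0.
Qed.
End Four.

From mathcomp Require Import all_boot all_order all_algebra.
From mathcomp Require Import reals.
From mathcomp Require Import ring lra.
From Stdlib Require Import Classical.
Import Order.TTheory GRing.Theory Num.Theory.
Local Open Scope ring_scope.
Set Implicit Arguments. Unset Strict Implicit. Unset Printing Implicit Defensive.

Theorem theorem4p2 (R : realType) (n : nat) (M1 M2 : 'M[R]_n) :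
  symmx M1 -> symmx M2 ->
  ROG (Tcone M1 M2) ->
  (exists a1 a2 : R, (a1, a2) != (0, 0) /\ psdmx (a1 *: M1 + a2 *: M2)) \/
  (exists a b c : 'cV[R]_n,
      M1 = Symm (a *m c^T) /\ M2 = Symm (b *m c^T)).
Proof.
move=> sM1 sM2 HROG; rewrite /symmx in sM1 sM2.
have [Hi|notI] := classic (exists a1 a2 : R, (a1, a2) != (0, 0) /\ psdmx (a1 *: M1 + a2 *: M2)).
  by left.
pose S (s1 s2 : R) := exists v, s1 = bf M1 v v /\ s2 = bf M2 v v.
have NI : forall l1 l2 : R, (l1 != 0) || (l2 != 0) ->
    exists s1 s2, S s1 s2 /\ l1 * s1 + l2 * s2 < 0.
  move=> l1 l2 hl.
  have np : ~ psdmx (l1 *: M1 + l2 *: M2).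
    by move=> hp; apply: notI; exists l1, l2; split => //; rewrite xpair_eqE negb_and.
  apply: NNPP => hn; apply: np; split.
    by rewrite /symmx linearD /= !linearZ /= sM1 sM2.
  move=> x; rewrite -/(bf _ x x) bfMD !bfMZ leNgt; apply/negP => hneg; apply: hn.
  by exists (bf M1 x x), (bf M2 x x); split => //; exists x.
have [a1 [a2 [b1 [b2 [mu [nu [Sa [Sb [mu0 [nu0 [ew1 ew2]]]]]]]]]]] :=
  cone2 NI (- \tr M1) (- \tr M2).
case: Sa => v1 [ea1 ea2]; case: Sb => v2 [eb1 eb2].
pose X := 1%:M + mu *: (v1 *m v1^T) + nu *: (v2 *m v2^T).
have bfX : forall x, bf X x x = dot x x + mu * (dot v1 x) ^+ 2 + nu * (dot v2 x) ^+ 2.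
  move=> x; rewrite /X !bfMD !bfMZ !bf_rank1 bf1.
  rewrite -/(dot x v1) -/(dot v1 x) -/(dot x v2) -/(dot v2 x) (dotC x v1) (dotC x v2).
  by rewrite !expr2.
have sX : X^T = X.
  rewrite /X !linearD /= !linearZ /= !trmx_mul !trmxK.
  by rewrite trmx1.
have TX : Tcone M1 M2 X.
  split; [split => // x | split].
  - rewrite -/(bf X x x) bfX; apply: addr_ge0; first apply: addr_ge0.
    + exact: dot_ge0.
    + by apply: mulr_ge0 => //; apply: sqr_ge0.
    + by apply: mulr_ge0 => //; apply: sqr_ge0.
  - rewrite /X !frobD !frobZ !frob_bf -ea1 -eb1.
    have -> : frob M1 1%:M = \tr M1 by rewrite /frob mulmx1.
    by move: ew1; lra.
  - rewrite /X !frobD !frobZ !frob_bf -ea2 -eb2.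
    have -> : frob M2 1%:M = \tr M2 by rewrite /frob mulmx1.
    by move: ew2; lra.
have Xinj : forall d : 'cV[R]_n, X *m d = 0 -> d = 0.
  move=> d Xd; have : bf X d d = 0 by rewrite /bf -mulmxA Xd mulmx0 mxE.
  rewrite bfX => h; apply: dot_eq0.
  have := dot_ge0 d.
  have : 0 <= mu * dot v1 d ^+ 2 by apply: mulr_ge0 => //; apply: sqr_ge0.
  have : 0 <= nu * dot v2 d ^+ 2 by apply: mulr_ge0 => //; apply: sqr_ge0.
  lra.
have Xu : X \in unitmx.
  rewrite -row_free_unit; apply: inj_row_free => v vX.
  have : X *m v^T = 0 by rewrite -{1}sX -trmx_mul vX trmx0.
  by move/Xinj => /(congr1 trmx); rewrite trmxK trmx0.
have [kk [w [u [w0 [w1 [Tu EX]]]]]] := proj1 (HROG X) TX.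
have span : forall y, exists c : 'I_kk -> R, y = \sum_i c i *: u i.
  move=> y; exists (fun i => w i * dot (u i) (invmx X *m y)).
  have {1}-> : y = X *m (invmx X *m y) by rewrite mulKVmx.
  set d := invmx X *m y.
  rewrite {1}EX mulmx_suml; apply: eq_bigr => i _.
  by rewrite -scalemxAl -mulmxA mx11_dot mul_mx_scalar scalerA.
have qu : forall i, bf M1 (u i) (u i) = 0 /\ bf M2 (u i) (u i) = 0.
  move=> i; have [_ [H1 H2]] := Tu i.
  by rewrite -!frob_bf.
have [[i [y1 [y2 hD]]] | noprof] := classic (exists i y1 y2,
   det2 (bf M1 (u i) y1) (bf M2 (u i) y1) (bf M1 (u i) y2) (bf M2 (u i) y2) != 0).
  right; have [q1 q2] := qu i.
  have Hall := lemXall sM1 sM2 HROG q1 q2 hD.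
  have [c Hc] := factor sM1 sM2 hD Hall.
  exists (M1 *m u i), (M2 *m u i), c.
  split; apply: quad_eq => //; try exact: Symm_sym; move=> y; rewrite bf_Symm.
  - exact: (Hc y).1.
  - exact: (Hc y).2.
left.
have prof : forall i, prof1 M1 M2 (u i).
  move=> i y1 y2; apply: NNPP => h; apply: noprof; exists i, y1, y2.
  by apply/eqP.
apply: (par_i sM1 sM2 span) => i j i' j'.
apply: NNPP => h.
have hn : det2 (bf M1 (u i) (u j)) (bf M2 (u i) (u j))
               (bf M1 (u i') (u j')) (bf M2 (u i') (u j')) != 0 by apply/eqP.
have [qi1 qi2] := qu i; have [qj1 qj2] := qu j.
have [qi1' qi2'] := qu i'; have [qj1' qj2'] := qu j'.
have V := four_viol sM1 sM2 qi1 qi2 qj1 qj2 qi1' qi2' qj1' qj2'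
            (prof i) (prof j) (prof i') (prof j') hn.
exact: (VL sM1 sM2 V HROG).
Qed.
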